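(* Let $G$ be a dicotic nonzugzwang scoring game all of whose terminal positions are numbers, and let $t\geq 0$. Then $0\leq Ls(G)-Ls(G_t)\leq t$ and $0\geq Rs(G)-Rs(G_t)\geq -t$.
   Context: A scoring game is $G=\langle G^L\mid G^R\rangle$ with $G^L,G^R$ finite nonempty sets of scoring games or empty sets decorated with a real, $\emptyset^s$; $\langle\emptyset^s\mid\emptyset^s\rangle$ is the number $s$. $Ls(\langle\emptyset^s\mid G^R\rangle)=s$, $Rs(\langle G^L\mid\emptyset^s\rangle)=s$, otherwise $Ls(G)=\max_{G^l\in G^L}Rs(G^l)$, $Rs(G)=\min_{G^r\in G^R}Ls(G^r)$. Dicotic: at every position both players have options or neither; nonzugzwang: $Ls(H)\ge Rs(H)$ at every position $H$. For a game $H$ and real $c$, $H+c$ is $H$ with $c$ added to every terminal score. Cooling: if $G$ is a number $k$, $G_t=k$ for all $t\ge 0$ and its temperature is $0$. Otherwise let $\widetilde G_t=\langle \{G^l_t-t: G^l\in G^L\}\mid \{G^r_t+t: G^r\in G^R\}\rangle$, let $t_0=\min\{t\geq 0: Ls(\widetilde G_t)=Rs(\widetilde G_t)\}$ (this minimum exists for dicotic nonzugzwang games), and set $G_t=\widetilde G_t$ for $t\le t_0$ and $G_t$ equal to the number $Ls(\widetilde G_{t_0})$ for $t>t_0$. The number $t_0$ is the temperature $\sigma(G)$. *)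

(* Defs.v *)
From HB Require Import structures.
From mathcomp Require Import all_boot all_order all_algebra.
From mathcomp Require Import classical_sets reals.
From Stdlib Require List.
Set Implicit Arguments. Unset Strict Implicit. Unset Printing Implicit Defensive.
Import Order.TTheory GRing.Theory Num.Theory.
Local Open Scope ring_scope.
Local Open Scope classical_set_scope.

(* A scoring game  <G^L | G^R>.  [Game sl L sr Rr] has left options [L] and
   right options [Rr]; when [L = [::]] the left side is the decorated empty
   set  ∅^sl  (similarly for the right side with sr).  The score decorating a
   nonempty side is irrelevant (ignored by every definition below). *)
Inductive game (R : Type) : Type :=
  Game of R & seq (game R) & R & seq (game R).

Section Games.
Variable R : realType.

Definition Num (s : R) : game R := Game s [::] s [::].

Fixpoint LRs (g : game R) : R * R :=
  match g with
  | Game sl L sr Rr =>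
    (match L with
     | [::] => sl
     | l0 :: L' => foldr Order.max (LRs l0).2 (map (fun h => (LRs h).2) L')
     end,
     match Rr with
     | [::] => sr
     | r0 :: R' => foldr Order.min (LRs r0).1 (map (fun h => (LRs h).1) R')
     end)
  end.

Definition Ls (g : game R) : R := (LRs g).1.
Definition Rs (g : game R) : R := (LRs g).2.

Fixpoint shift (g : game R) (c : R) : game R :=
  match g with
  | Game sl L sr Rr =>
      Game (sl + c) (map (fun h => shift h c) L) (sr + c) (map (fun h => shift h c) Rr)
  end.

Fixpoint positions (g : game R) : seq (game R) :=
  match g with
  | Game _ L _ Rr =>
      g :: (flatten (map positions L) ++ flatten (map positions Rr))
  end.

Definition options_left (g : game R) : seq (game R) :=
  let: Game _ L _ _ := g in L.
Definition options_right (g : game R) : seq (game R) :=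
  let: Game _ _ _ Rr := g in Rr.

Definition dicotic (G : game R) : Prop :=
  forall H, List.In H (positions G) ->
    (options_left H = [::] <-> options_right H = [::]).

Definition nonzugzwang (G : game R) : Prop :=
  forall H, List.In H (positions G) -> Rs H <= Ls H.

Definition terminal_numbers (G : game R) : Prop :=
  forall H, List.In H (positions G) ->
    options_left H = [::] -> options_right H = [::] ->
    exists s, H = Num s.

(* If G is a number it is unchanged; otherwise
   tilde G_u = < G^l_u - u | G^r_u + u >,
   t0 = min { u >= 0 : Ls(tilde G_u) = Rs(tilde G_u) } (taken as the infimum,
   which is that minimum whenever it exists), and
   G_t = tilde G_t for t <= t0, and the number Ls(tilde G_t0) for t > t0. *)
Fixpoint cool (g : game R) (t : R) {struct g} : game R :=
  match g with
  | Game sl L sr Rr =>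
    if [&& nilp L, nilp Rr & sl == sr] then g else
    let tl := fun u : R =>
      Game sl (map (fun h => shift (cool h u) (- u)) L)
           sr (map (fun h => shift (cool h u) u) Rr) in
    let t0 := inf [set u : R | 0 <= u /\ Ls (tl u) = Rs (tl u)] in
    if t <= t0 then tl t else Num (Ls (tl t0))
  end.

Definition temperature (g : game R) : R :=
  match g with
  | Game sl L sr Rr =>
    if [&& nilp L, nilp Rr & sl == sr] then 0 else
    let tl := fun u : R =>
      Game sl (map (fun h => shift (cool h u) (- u)) L)
           sr (map (fun h => shift (cool h u) u) Rr) in
    inf [set u : R | 0 <= u /\ Ls (tl u) = Rs (tl u)]
  end.

End Games.

(* Main.v *)
Require Import Defs.
From HB Require Import structures.
From mathcomp Require Import all_boot all_order all_algebra.
From mathcomp Require Import classical_sets reals lra.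
Import Order.TTheory GRing.Theory Num.Theory.
Local Open Scope ring_scope.
Local Open Scope classical_set_scope.

Fixpoint game_ind2 {R : realType} (P : game R -> Prop)
  (H : forall sl L sr Rr, (forall h, List.In h L -> P h) ->
        (forall h, List.In h Rr -> P h) -> P (Game sl L sr Rr)) (g : game R) : P g :=
  match g with
  | Game sl L sr Rr =>
    let fix aux (l : seq (game R)) : forall h, List.In h l -> P h :=
      match l with
      | [::] => fun h (F : List.In h [::]) => False_ind _ F
      | x :: l' => fun h Hin => match Hin with
                   | or_introl e => eq_ind x P (game_ind2 P H x) h e
                   | or_intror i => aux l' h i end
      end in
    H sl L sr Rr (aux L) (aux Rr)
  end.

Lemma In_cat {T : Type} (x : T) (s1 s2 : seq T) :
  List.In x (s1 ++ s2) <-> List.In x s1 \/ List.In x s2.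
Proof. elim: s1 => [|a s IH] /=; [tauto| rewrite IH; tauto]. Qed.

Lemma In_flatten {R : realType} (h x : game R) (L : seq (game R)) :
  List.In h L -> List.In x (positions h) -> List.In x (flatten (map (@positions R) L)).
Proof.
elim: L => [|a L IH] //= [<-|Hh] Hx; apply/In_cat; [left|right]; auto.
Qed.

Definition valid {R : realType} (g : game R) :=
  dicotic g /\ nonzugzwang g /\ terminal_numbers g.

Lemma valid_sub {R : realType} (g h : game R) :
  (forall x, List.In x (positions h) -> List.In x (positions g)) -> valid g -> valid h.
Proof.
move=> S [D [N T]]; split; [|split] => x /S Hx; [exact: D|exact: N|exact: T].
Qed.

Lemma valid_L {R : realType} sl L sr Rr (h : game R) :
  valid (Game sl L sr Rr) -> List.In h L -> valid h.
Proof.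
move=> V Hh; apply: valid_sub V => x Hx /=; right; apply/In_cat; left.
exact: In_flatten Hh Hx.
Qed.

Lemma valid_R {R : realType} sl L sr Rr (h : game R) :
  valid (Game sl L sr Rr) -> List.In h Rr -> valid h.
Proof.
move=> V Hh; apply: valid_sub V => x Hx /=; right; apply/In_cat; right.
exact: In_flatten Hh Hx.
Qed.

Lemma maxF_le {R : realType} (F G : game R -> R) (c : R) l0 L :
  (forall h, List.In h (l0 :: L) -> F h <= G h + c) ->
  foldr Order.max (F l0) (map F L) <= foldr Order.max (G l0) (map G L) + c.
Proof.
elim: L => [|a L IH] H /=; first by apply: H; left.
rewrite ge_max; apply/andP; split.
  have Ha : F a <= G a + c by apply: H; right; left.
  apply: le_trans Ha _.
  by rewrite lerD2r le_max lexx.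
have IH2 := IH (fun h Hh => H h (match Hh with or_introl e => or_introl e | or_intror i => or_intror (or_intror i) end)).
apply: le_trans IH2 _.
by rewrite lerD2r le_max lexx orbT.
Qed.

Lemma minF_le {R : realType} (F G : game R -> R) (c : R) l0 L :
  (forall h, List.In h (l0 :: L) -> F h <= G h + c) ->
  foldr Order.min (F l0) (map F L) <= foldr Order.min (G l0) (map G L) + c.
Proof.
elim: L => [|a L IH] H /=; first by apply: H; left.
rewrite -lerBlDr le_min; apply/andP; split; rewrite lerBlDr.
  have Ha : F a <= G a + c by apply: H; right; left.
  apply: le_trans _ Ha.
  by rewrite ge_min lexx.
have IH2 := IH (fun h Hh => H h (match Hh with or_introl e => or_introl e | or_intror i => or_intror (or_intror i) end)).
apply: le_trans _ IH2.
by rewrite ge_min lexx orbT.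
Qed.

Lemma maxF_shift {R : realType} (F : game R -> R) (c : R) l0 L :
  foldr Order.max (F l0 + c) (map (fun h => F h + c) L) = foldr Order.max (F l0) (map F L) + c.
Proof.
apply/le_anti/andP; split.
  by apply: (maxF_le (fun h => F h + c) F c).
rewrite -lerBrDr; apply: (maxF_le F (fun h => F h + c) (-c)) => h _.
by rewrite addrK.
Qed.

Lemma minF_shift {R : realType} (F : game R -> R) (c : R) l0 L :
  foldr Order.min (F l0 + c) (map (fun h => F h + c) L) = foldr Order.min (F l0) (map F L) + c.
Proof.
apply/le_anti/andP; split.
  by apply: (minF_le (fun h => F h + c) F c).
rewrite -lerBrDr; apply: (minF_le F (fun h => F h + c) (-c)) => h _.
by rewrite addrK.
Qed.

Lemma eq_map_In {T U : Type} (f g : T -> U) (s : seq T) :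
  (forall x, List.In x s -> f x = g x) -> map f s = map g s.
Proof. elim: s => [|a s IH] //= H; rewrite H ?IH //; [move=> x Hx; apply: H|]; by [right|left]. Qed.

Lemma LRs_shift {R : realType} (g : game R) c :
  Ls (shift g c) = Ls g + c /\ Rs (shift g c) = Rs g + c.
Proof.
elim/(@game_ind2 R): g => sl L sr Rr IHL IHR; rewrite /Ls /Rs /=; split.
  case: L IHL => [|l0 L] IH //=.
  rewrite -!map_comp -maxF_shift; congr foldr.
    by case: (IH l0 (or_introl erefl)).
  apply: eq_map_In => h hin /=.
  by case: (IH h (or_intror hin)).
case: Rr IHR => [|r0 Rr] IH //=.
rewrite -!map_comp -minF_shift; congr foldr.
  by case: (IH r0 (or_introl erefl)).
apply: eq_map_In => h hin /=.
by case: (IH h (or_intror hin)).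
Qed.
Lemma core {R : realType} (MA MB : R -> R) (S : set R) (T : R) :
  (forall u v, 0 <= u -> u <= v -> MA u <= MA v /\ MA v <= MA u + (v - u)) ->
  (forall u v, 0 <= u -> u <= v -> MB v <= MB u /\ MB u <= MB v + (v - u)) ->
  MB 0 <= MA 0 -> 0 <= T ->
  (forall u, T <= u -> MA u = MA T /\ MB u = MB T) ->
  (forall u, S u <-> (0 <= u /\ MA u - u = MB u + u)) ->
  0 <= inf S /\ MA (inf S) - inf S = MB (inf S) + inf S.
Proof.
move=> hA hB h0 T0 hT hS.
pose f u := (MA u - u) - (MB u + u).
have fmon : forall u v, 0 <= u -> u <= v -> f v <= f u /\ f u <= f v + 2 * (v - u).
  move=> u v u0 uv; have [a1 a2] := hA u v u0 uv; have [b1 b2] := hB u v u0 uv.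
  rewrite /f; split; lra.
have fT : forall u, T <= u -> f u = f T - 2 * (u - T).
  by move=> u Tu; have [e1 e2] := hT u Tu; rewrite /f e1 e2; lra.
pose S' := [set u : R | 0 <= u /\ f u <= 0].
have S'n : S' !=set0.
  have [fT0|fT0] := Order.TotalTheory.leP (f T) 0; first by exists T.
  exists (T + f T); split; first lra.
  rewrite fT; lra.
have S'l : has_lbound S' by exists 0 => y [].
have S'i : has_inf S' by [].
pose s := inf S'.
have s0 : 0 <= s by apply: lb_le_inf => // y [].
have sl : forall y, S' y -> s <= y by move=> y Sy; apply: ge_inf.
have f0 : 0 <= f 0 by rewrite /f; lra.
have fs1 : f s <= 0.
  rewrite leNgt; apply/negP => fpos.
  have [e Se es] := inf_adherent (divr_gt0 fpos (ltr0Sn R 1)) S'i.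
  have se := sl e Se.
  have [_ h2] := fmon s e s0 se.
  case: Se => _ fe.
  rewrite -/s in es.
  have : f s <= 2 * (e - s) by lra.
  have : 2 * (e - s) < f s.
    have : e - s < f s / 2%:R by lra.
    move=> H; rewrite -ltr_pdivlMl; last by [].
    by rewrite mulrC.
  lra.
have fs2 : 0 <= f s.
  rewrite leNgt; apply/negP => fneg.
  have [hh|hh] := Order.TotalTheory.leP 0 (s + f s / 2%:R).
    have Se : S' (s + f s / 2%:R).
      split => //.
      have [_ h2] := fmon (s + f s / 2%:R) s hh ltac:(lra).
      lra.
    have := sl _ Se; lra.
  have [_ h2] := fmon 0 s (lexx 0) s0.
  lra.
have fs : f s = 0 by apply/le_anti; rewrite fs1 fs2.
have Ss : S s by apply/hS; split => //; rewrite /f in fs; lra.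
have -> : inf S = s.
  apply/le_anti/andP; split.
    apply: ge_inf => //; by exists 0 => y /hS [].
  apply: lb_le_inf; first by exists s.
  move=> y /hS [y0 ey]; apply: sl; split => //; rewrite /f; lra.
split => //; rewrite /f in fs; lra.
Qed.

Definition tlg {R : realType} sl (L : seq (game R)) sr Rr (u : R) :=
  Game sl (map (fun h => shift (cool h u) (- u)) L) sr (map (fun h => shift (cool h u) u) Rr).

Definition EC {R : realType} (h : game R) (T : R) :=
  forall u, T <= u -> Ls (cool h u) = Ls (cool h T) /\ Rs (cool h u) = Rs (cool h T).

Lemma EC_mono {R : realType} (h : game R) T T' : EC h T -> T <= T' -> EC h T'.
Proof.
move=> E TT' u Tu; have [e1 e2] := E u (le_trans TT' Tu).
have [e3 e4] := E T' TT'; by rewrite e1 e2 e3 e4.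
Qed.

Lemma EC_list {R : realType} (L : seq (game R)) :
  (forall h, List.In h L -> exists T, 0 <= T /\ EC h T) ->
  exists T, 0 <= T /\ forall h, List.In h L -> EC h T.
Proof.
elim: L => [|a L IH] H; first by exists 0; split.
have [Ta [Ta0 Ea]] := H a (or_introl erefl).
have [Tl [Tl0 El]] := IH (fun h hin => H h (or_intror hin)).
exists (Order.max Ta Tl); split; first by rewrite le_max Ta0.
move=> h [<-|hin]; [apply: EC_mono Ea _|apply: EC_mono (El h hin) _];
  by rewrite le_max lexx ?orbT.
Qed.

Definition Qp {R : realType} (g : game R) :=
  (Ls (cool g 0) = Ls g /\ Rs (cool g 0) = Rs g) /\
  (forall u v, 0 <= u -> u <= v ->
     Ls (cool g v) <= Ls (cool g u) /\ Ls (cool g u) <= Ls (cool g v) + (v - u) /\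
     Rs (cool g u) <= Rs (cool g v) /\ Rs (cool g v) <= Rs (cool g u) + (v - u)) /\
  (exists T, 0 <= T /\ EC g T).
Lemma allQ {R : realType} (g : game R) : valid g -> Qp g.
Proof.
elim/(@game_ind2 R): g => sl L sr Rr IHL IHR V.
have QL : forall h, List.In h L -> Qp h := fun h hin => IHL h hin (valid_L _ _ _ _ _ V hin).
have QR : forall h, List.In h Rr -> Qp h := fun h hin => IHR h hin (valid_R _ _ _ _ _ V hin).
have Vin : List.In (Game sl L sr Rr) (positions (Game sl L sr Rr)) by left.
have [VD [VN VT]] := V.
case: L {IHL} QL Vin VD VN VT V => [|l0 L'] QL Vin VD VN VT V;
  case: Rr {IHR} QR Vin VD VN VT V => [|r0 R'] QR Vin VD VN VT V.
- have [s Es] := VT _ Vin erefl erefl.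
  case: Es => -> ->.
  have E : forall u, cool (Game s [::] s [::]) u = Game s [::] s [::] by move=> u; rewrite /= eqxx.
  rewrite /Qp !E; split; first by [].
  split; last by exists 0; split => // u _; rewrite !E.
  move=> u v _ uv; rewrite !E; lra.
- by have := (VD _ Vin).1 erefl.
- by have := (VD _ Vin).2 erefl.
pose MA u := foldr Order.max (Rs (cool l0 u)) (map (fun h => Rs (cool h u)) L').
pose MB u := foldr Order.min (Ls (cool r0 u)) (map (fun h => Ls (cool h u)) R').
have EA : forall u, Ls (tlg sl (l0 :: L') sr (r0 :: R') u) = MA u - u.
  move=> u; rewrite /Ls /tlg /= -map_comp /MA -maxF_shift; congr foldr.
    exact: (LRs_shift _ _).2.
  by apply: eq_map_In => h _; exact: (LRs_shift _ _).2.
have EB : forall u, Rs (tlg sl (l0 :: L') sr (r0 :: R') u) = MB u + u.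
  move=> u; rewrite /Rs /tlg /= -map_comp /MB -minF_shift; congr foldr.
    exact: (LRs_shift _ _).1.
  by apply: eq_map_In => h _; exact: (LRs_shift _ _).1.
have MA0 : MA 0 = Ls (Game sl (l0 :: L') sr (r0 :: R')).
  rewrite /MA /Ls /=; congr foldr; first exact: (QL l0 (or_introl erefl)).1.2.
  by apply: eq_map_In => h hin; exact: (QL h (or_intror hin)).1.2.
have MB0 : MB 0 = Rs (Game sl (l0 :: L') sr (r0 :: R')).
  rewrite /MB /Rs /=; congr foldr; first exact: (QR r0 (or_introl erefl)).1.1.
  by apply: eq_map_In => h hin; exact: (QR h (or_intror hin)).1.1.
have hA : forall u v, 0 <= u -> u <= v -> MA u <= MA v /\ MA v <= MA u + (v - u).
  move=> u v u0 uv; split.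
    suff : MA u <= MA v + 0 by rewrite addr0.
    apply: (@maxF_le R (fun h => Rs (cool h u)) (fun h => Rs (cool h v)) 0 l0 L') => h hin.
    have [_ [+ _]] := QL h hin; move/(_ u v u0 uv) => [_ [_ [+ _]]]; by rewrite addr0.
  apply: (@maxF_le R (fun h => Rs (cool h v)) (fun h => Rs (cool h u)) (v - u) l0 L') => h hin.
  have [_ [+ _]] := QL h hin; move/(_ u v u0 uv) => [_ [_ [_ +]]]; by [].
have hB : forall u v, 0 <= u -> u <= v -> MB v <= MB u /\ MB u <= MB v + (v - u).
  move=> u v u0 uv; split.
    suff : MB v <= MB u + 0 by rewrite addr0.
    apply: (@minF_le R (fun h => Ls (cool h v)) (fun h => Ls (cool h u)) 0 r0 R') => h hin.
    have [_ [+ _]] := QR h hin; move/(_ u v u0 uv) => [+ _]; by rewrite addr0.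
  apply: (@minF_le R (fun h => Ls (cool h u)) (fun h => Ls (cool h v)) (v - u) r0 R') => h hin.
  have [_ [+ _]] := QR h hin; move/(_ u v u0 uv) => [_ [+ _]]; by [].
have [TL [TL0 ECL]] := @EC_list R (l0 :: L') (fun h hin => (QL h hin).2.2).
have [TR [TR0 ECR]] := @EC_list R (r0 :: R') (fun h hin => (QR h hin).2.2).
pose T := Order.max TL TR.
have T0 : 0 <= T by rewrite le_max TL0.
have hT : forall u, T <= u -> MA u = MA T /\ MB u = MB T.
  have ECL' : forall h, List.In h (l0 :: L') -> EC h T.
    by move=> h hin; apply: EC_mono (ECL h hin) _; rewrite le_max lexx.
  have ECR' : forall h, List.In h (r0 :: R') -> EC h T.
    by move=> h hin; apply: EC_mono (ECR h hin) _; rewrite le_max lexx orbT.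
  move=> u Tu; split.
    rewrite /MA; congr foldr; first exact: (ECL' l0 (or_introl erefl) u Tu).2.
    by apply: eq_map_In => h hin; exact: (ECL' h (or_intror hin) u Tu).2.
  rewrite /MB; congr foldr; first exact: (ECR' r0 (or_introl erefl) u Tu).1.
  by apply: eq_map_In => h hin; exact: (ECR' h (or_intror hin) u Tu).1.
have h0 : MB 0 <= MA 0 by rewrite MA0 MB0; exact: VN _ Vin.
pose S := [set u : R | 0 <= u /\ Ls (tlg sl (l0 :: L') sr (r0 :: R') u) = Rs (tlg sl (l0 :: L') sr (r0 :: R') u)].
have hS : forall u, S u <-> (0 <= u /\ MA u - u = MB u + u).
  by move=> u; rewrite /S /= EA EB.
have [s0 ss] := @core R MA MB S T hA hB h0 T0 hT hS.
have Ecool : forall u, cool (Game sl (l0 :: L') sr (r0 :: R')) u =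
   if u <= inf S then tlg sl (l0 :: L') sr (r0 :: R') u
   else Defs.Num (Ls (tlg sl (l0 :: L') sr (r0 :: R') (inf S))) by [].
set s := inf S in s0 ss Ecool.
have EL : forall u, 0 <= u -> Ls (cool (Game sl (l0 :: L') sr (r0 :: R')) u) = MA (Num.min u s) - Num.min u s.
  move=> u u0; rewrite Ecool; case: (Order.TotalTheory.leP u s) => us.
    by rewrite EA.
  by rewrite EA.
have ER : forall u, 0 <= u -> Rs (cool (Game sl (l0 :: L') sr (r0 :: R')) u) = MB (Num.min u s) + Num.min u s.
  move=> u u0; rewrite Ecool; case: (Order.TotalTheory.leP u s) => us.
    by rewrite EB.
  by rewrite EA ss.
have mm : forall u, (u <= s /\ Num.min u s = u) \/ (s < u /\ Num.min u s = s).
  by move=> u; case: (Order.TotalTheory.leP u s) => us; [left|right].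
split.
  rewrite EL ?lexx // ER ?lexx // (min_idPl s0) -MA0 -MB0; split; lra.
split.
  move=> u v u0 uv; have v0 : 0 <= v by apply: le_trans uv.
  rewrite (EL u u0) (EL v v0) (ER u u0) (ER v v0).
  have [[us eu]|[us eu]] := mm u; have [[vs ev]|[vs ev]] := mm v; rewrite eu ev.
  - have := hA u v u0 uv; have := hB u v u0 uv; lra.
  - have := hA u s u0 us; have := hB u s u0 us; lra.
  - lra.
  - lra.
exists s; split => // u su.
have u0 : 0 <= u by apply: le_trans su.
rewrite (EL u u0) (EL s s0) (ER u u0) (ER s s0).
by rewrite (min_idPr su) minxx.
Qed.

Local Close Scope classical_set_scope.

Theorem mainTheorem2 (R : realType) (G : game R) (t : R) :
  dicotic G -> nonzugzwang G -> terminal_numbers G -> 0 <= t ->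
  (0 <= Ls G - Ls (cool G t) <= t) /\ (- t <= Rs G - Rs (cool G t) <= 0).
Proof.
move=> D N T t0.
have [[e1 e2] [H _]] := @allQ R G (conj D (conj N T)).
have := H 0 t (lexx 0) t0; rewrite e1 e2 subr0 => -[a [b [c d]]].
by split; apply/andP; split; lra.
Qed.
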